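(* Let $E=(L^0)^{\mathbb N}$ be the $L^0$-module of all sequences $(x_n)_{n\in\mathbb N}$ in $L^0$, and let $\mathscr P=\{p_k:k\in\mathbb N\}$ with $p_k((x_n))=|x_k|$. Let $E^*_0$ be the set of $L^0$-linear maps $f:E\to L^0$ which are continuous from $(E,\mathscr T_0(\mathscr P))$ to $(L^0,\mathscr T_0(\{|\cdot|\}))$. Then a map $f:E\to L^0$ belongs to $E^*_0$ if and only if there exist $m\in\mathbb N$ and $x_1,\dots,x_m\in L^0$ such that $f((y_n))=\sum_{n=1}^m x_ny_n$ for all $(y_n)\in E$.
   Context: $L^0$ is the ring of real-valued measurable functions on a probability space modulo a.e. equality, ordered a.e.; $L^0_{++}=\{r\in L^0:r>0\text{ a.e.}\}$. For a collection $\mathscr P$ of $L^0$-seminorms (maps $p:E\to L^0_+$ with $p(rx)=|r|p(x)$, $p(x+y)\le p(x)+p(y)$) on an $L^0$-module $E$, $\mathscr T_0(\mathscr P)$ is the topology generated by the base of sets $\{y\in E:\sup_{p\in N}p(x-y)<r\}$ with $x\in E$, $N\subset\mathscr P$ finite, $r\in L^0_{++}$. On $L^0$, $\mathscr T_0(\{|\cdot|\})$ is the topology with base $\{s\in L^0:|s-t|<r\}$, $t\in L^0$, $r\in L^0_{++}$. *)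

(* Defs.v *)
From Stdlib Require Import Reals List.
Open Scope R_scope.

Section ProbSpace.
Variable Omega : Type.

Definition is_sigma_algebra (F : (Omega -> Prop) -> Prop) : Prop :=
  F (fun _ => True) /\
  (forall A, F A -> F (fun w => ~ A w)) /\
  (forall A : nat -> Omega -> Prop, (forall n, F (A n)) -> F (fun w => exists n, A n w)).

Definition is_prob_space (F : (Omega -> Prop) -> Prop) (P : (Omega -> Prop) -> R) : Prop :=
  is_sigma_algebra F /\
  (forall A, F A -> 0 <= P A) /\
  P (fun _ => True) = 1 /\
  (forall A : nat -> Omega -> Prop,
      (forall n, F (A n)) ->
      (forall n m w, n <> m -> A n w -> A m w -> False) ->
      infinite_sum (fun n => P (A n)) (P (fun w => exists n, A n w))).

Variables (F : (Omega -> Prop) -> Prop) (P : (Omega -> Prop) -> R).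

(** real-valued measurable functions (representatives of elements of L^0) *)
Definition measurable (X : Omega -> R) : Prop := forall a : R, F (fun w => X w <= a).

Definition ae (Q : Omega -> Prop) : Prop :=
  exists N, F N /\ P N = 0 /\ forall w, ~ N w -> Q w.

(** equality in L^0 (a.e. equality of representatives) *)
Definition ae_eq (X Y : Omega -> R) : Prop := ae (fun w => X w = Y w).

Definition in_E (x : nat -> Omega -> R) : Prop := forall n, measurable (x n).

Definition L0pp (r : Omega -> R) : Prop := measurable r /\ ae (fun w => 0 < r w).

Definition pk (k : nat) (x : nat -> Omega -> R) : Omega -> R := fun w => Rabs (x k w).

(** sup_{p in N} p(z) for a finite set N of indices (0 if N is empty) *)
Definition supP (N : list nat) (z : nat -> Omega -> R) : Omega -> R :=
  fun w => fold_right Rmax 0 (map (fun k => pk k z w) N).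

Definition seq_sub (x y : nat -> Omega -> R) : nat -> Omega -> R :=
  fun n w => x n w - y n w.

Definition ballE (x : nat -> Omega -> R) (N : list nat) (r : Omega -> R)
  (y : nat -> Omega -> R) : Prop :=
  ae (fun w => supP N (seq_sub x y) w < r w).

Definition openE (U : (nat -> Omega -> R) -> Prop) : Prop :=
  forall y, in_E y -> U y ->
    exists x N r, in_E x /\ L0pp r /\ ballE x N r y /\
      (forall z, in_E z -> ballE x N r z -> U z).

Definition ballL (t r s : Omega -> R) : Prop :=
  ae (fun w => Rabs (s w - t w) < r w).

Definition openL (V : (Omega -> R) -> Prop) : Prop :=
  forall s, measurable s -> V s ->
    exists t r, measurable t /\ L0pp r /\ ballL t r s /\
      (forall u, measurable u -> ballL t r u -> V u).

(** f : E -> L^0 is a well-defined map (on a.e.-classes) *)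
Definition is_map_E_L0 (f : (nat -> Omega -> R) -> Omega -> R) : Prop :=
  (forall x, in_E x -> measurable (f x)) /\
  (forall x y, in_E x -> in_E y -> (forall n, ae_eq (x n) (y n)) -> ae_eq (f x) (f y)).

Definition L0_linear (f : (nat -> Omega -> R) -> Omega -> R) : Prop :=
  (forall (r : Omega -> R) x, measurable r -> in_E x ->
     ae_eq (f (fun n w => r w * x n w)) (fun w => r w * f x w)) /\
  (forall x y, in_E x -> in_E y ->
     ae_eq (f (fun n w => x n w + y n w)) (fun w => f x w + f y w)).

Definition continuous_T0 (f : (nat -> Omega -> R) -> Omega -> R) : Prop :=
  forall V, openL V -> openE (fun y => V (f y)).

Definition in_Estar0 (f : (nat -> Omega -> R) -> Omega -> R) : Prop :=
  L0_linear f /\ continuous_T0 f.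

Fixpoint fsum (m : nat) (g : nat -> R) : R :=
  match m with O => 0 | S m' => fsum m' g + g m' end.

End ProbSpace.

(* Main.v *)
Require Import Defs.
From Stdlib Require Import ZArith Reals List Lra Lia Classical FunctionalExtensionality PropExtensionality ClassicalEpsilon.
Open Scope R_scope.

Section S.
Variable Omega : Type.
Variable F : (Omega -> Prop) -> Prop.
Variable P : (Omega -> Prop) -> R.
Hypothesis HP : is_prob_space Omega F P.

Lemma pred_ext (A B : Omega -> Prop) : (forall w, A w <-> B w) -> A = B.
Proof. intro H; apply functional_extensionality; intro w; apply propositional_extensionality; auto. Qed.

Lemma F_ext A B : F A -> (forall w, A w <-> B w) -> F B.
Proof. intros H E; rewrite <- (pred_ext A B E); auto. Qed.

Lemma P_ext A B : (forall w, A w <-> B w) -> P A = P B.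
Proof. intros E; rewrite (pred_ext A B E); auto. Qed.

Lemma F_True : F (fun _ => True).
Proof. destruct HP as [[H _] _]; auto. Qed.
Lemma F_compl A : F A -> F (fun w => ~ A w).
Proof. destruct HP as [[_ [H _]] _]; auto. Qed.
Lemma F_cunion (A : nat -> Omega -> Prop) : (forall n, F (A n)) -> F (fun w => exists n, A n w).
Proof. destruct HP as [[_ [_ H]] _]; auto. Qed.
Lemma F_empty : F (fun _ => False).
Proof. apply F_ext with (fun w => ~ True); [apply F_compl, F_True| tauto]. Qed.
Lemma F_union A B : F A -> F B -> F (fun w => A w \/ B w).
Proof.
  intros HA HB. apply F_ext with (fun w => exists n:nat, match n with O => A w | _ => B w end).
  - apply F_cunion; intros [|n]; auto.
  - intro w; split. intros [[|n] H]; auto. intros [H|H]; [exists O|exists 1%nat]; auto.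
Qed.
Lemma F_inter A B : F A -> F B -> F (fun w => A w /\ B w).
Proof.
  intros HA HB. apply F_ext with (fun w => ~ (~ A w \/ ~ B w)).
  - apply F_compl, F_union; apply F_compl; auto.
  - intro w; tauto.
Qed.
Lemma F_cinter (A : nat -> Omega -> Prop) : (forall n, F (A n)) -> F (fun w => forall n, A n w).
Proof.
  intros H. apply F_ext with (fun w => ~ exists n, ~ A n w).
  - apply F_compl, F_cunion; intro; apply F_compl; auto.
  - intro w; split. intros H1 n. apply NNPP; intro; apply H1; eauto. intros H1 [n Hn]; auto.
Qed.

Lemma P_nonneg A : F A -> 0 <= P A.
Proof. destruct HP as [_ [H _]]; auto. Qed.

Lemma P_empty : P (fun _ => False) = 0.
Proof.
  destruct HP as [_ [_ [_ Hc]]].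
  assert (H := Hc (fun _ _ => False) (fun _ => F_empty) (fun _ _ _ _ h _ => h)).
  cbv beta in H.
  rewrite (P_ext (fun w => exists _ : nat, False) (fun _ => False)) in H by (intro; split; [intros [_ h]; auto| tauto]).
  set (c := P (fun _ => False)) in *.
  destruct (Req_dec c 0) as [e|ne]; auto. exfalso.
  destruct (H (Rabs c / 2)) as [N HN]. { apply Rabs_pos_lt in ne; lra. }
  assert (h1 := HN N (Nat.le_refl N)). assert (h2 := HN (S N) (Nat.le_succ_diag_r N)).
  unfold Rdist in h1, h2. simpl in h2. apply Rabs_pos_lt in ne.
  set (s := sum_f_R0 (fun _ => c) N) in *.
  assert (Rabs c <= Rabs (s + c - c) + Rabs (s - c)).
  { replace c with ((s + c - c) - (s - c)) at 1 by ring. apply Rabs_triang_inv2 || (unfold Rminus; apply Rle_trans with (Rabs (s+c+-c) + Rabs (-(s+-c))); [apply Rabs_triang| rewrite Rabs_Ropp; lra]). }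
  lra.
Qed.

Lemma P_add2 A B C : F A -> F B -> (forall w, A w -> B w -> False) ->
  (forall w, C w <-> A w \/ B w) -> P C = P A + P B.
Proof.
  intros HA HB Hd HC.
  destruct HP as [_ [_ [_ Hc]]].
  set (u := fun n : nat => match n with O => A | 1%nat => B | _ => fun _ => False end).
  assert (H := Hc u).
  assert (Hu : forall n, F (u n)) by (intros [|[|n]]; simpl; auto using F_empty).
  specialize (H Hu).
  assert (Hdisj : forall n m w, n <> m -> u n w -> u m w -> False).
  { intros [|[|n]] [|[|m]] w ne; simpl; try tauto; try (intros; eapply Hd; eauto). }
  specialize (H Hdisj).
  rewrite (P_ext _ C) in H.
  2: { intro w; rewrite HC; split. intros [[|[|n]] h]; simpl in h; tauto.
       intros [h|h]; [exists O|exists 1%nat]; auto. }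
  apply (uniqueness_sum _ _ _ H).
  intros eps Heps. exists 1%nat. intros n Hn.
  assert (E : sum_f_R0 (fun n => P (u n)) n = P A + P B).
  { destruct n as [|n]; [lia|]. clear Hn. induction n. simpl. ring.
    simpl sum_f_R0 in *. rewrite IHn. simpl. rewrite P_empty. ring. }
  rewrite E. unfold Rdist. rewrite Rminus_diag, Rabs_R0. lra.
Qed.

Lemma P_mono A B : F A -> F B -> (forall w, A w -> B w) -> P A <= P B.
Proof.
  intros HA HB Hs.
  rewrite (P_add2 A (fun w => B w /\ ~ A w) B); auto.
  - assert (0 <= P (fun w => B w /\ ~ A w)) by (apply P_nonneg, F_inter; auto using F_compl). lra.
  - apply F_inter; auto using F_compl.
  - intros w h [_ h']; auto.
  - intro w; split; [intro; destruct (classic (A w)); auto| intros [h|[h _]]; auto].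
Qed.

Lemma null_cunion (N : nat -> Omega -> Prop) : (forall n, F (N n) /\ P (N n) = 0) ->
  F (fun w => exists n, N n w) /\ P (fun w => exists n, N n w) = 0.
Proof.
  intros H. split. apply F_cunion; intro n; apply H.
  set (D := fun n w => N n w /\ ~ (exists k, (k < n)%nat /\ N k w)).
  assert (FD : forall n, F (D n)).
  { intro n. apply F_inter. apply H. apply F_compl. apply F_cunion. intro k.
    destruct (Compare_dec.lt_dec k n) as [l|l].
    - apply F_ext with (N k). apply H. intro; tauto.
    - apply F_ext with (fun _ => False). apply F_empty. intro; tauto. }
  assert (PD : forall n, P (D n) = 0).
  { intro n. assert (0 <= P (D n)) by (apply P_nonneg; auto).
    assert (P (D n) <= P (N n)) by (apply P_mono; auto; [apply H| intros w [h _]; auto]).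
    destruct (H n). lra. }
  destruct HP as [_ [_ [_ Hc]]].
  assert (Hs := Hc D FD).
  assert (Hdisj : forall n m w, n <> m -> D n w -> D m w -> False).
  { intros n m w ne [h1 h1'] [h2 h2']. destruct (Compare_dec.lt_dec n m). apply h2'; eauto.
    apply h1'. exists m. split; auto. lia. }
  specialize (Hs Hdisj).
  rewrite (P_ext _ (fun w => exists n, N n w)) in Hs.
  2: { intro w; split. intros [n [h _]]; eauto.
       intros [n hn]. revert hn. induction n as [n IH] using (well_founded_induction Wf_nat.lt_wf).
       intro hn. destruct (classic (exists k, (k < n)%nat /\ N k w)) as [[k [hk1 hk2]]|nx].
       - apply (IH k hk1 hk2).
       - exists n. split; auto. }
  apply (uniqueness_sum _ _ _ Hs). intros eps Heps. exists O. intros n _.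
  assert (E: sum_f_R0 (fun n => P (D n)) n = 0).
  { induction n; simpl; rewrite PD; [|rewrite IHn]; ring. }
  rewrite E. unfold Rdist. rewrite Rminus_diag, Rabs_R0. lra.
Qed.

Notation ae := (ae Omega F P).

Lemma ae_all (Q : nat -> Omega -> Prop) : (forall n, ae (Q n)) -> ae (fun w => forall n, Q n w).
Proof.
  intros H.
  set (N := fun n => proj1_sig (constructive_indefinite_description _ (H n))).
  assert (HN : forall n, F (N n) /\ P (N n) = 0 /\ forall w, ~ N n w -> Q n w).
  { intro n. unfold N. destruct (constructive_indefinite_description _ (H n)); auto. }
  destruct (null_cunion N) as [h1 h2]. intro n; destruct (HN n) as [a [b _]]; auto.
  exists (fun w => exists n, N n w). repeat split; auto.
  intros w hw n. apply (HN n). intro; apply hw; eauto.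
Qed.

Lemma ae_mono (Q Q' : Omega -> Prop) : ae Q -> (forall w, Q w -> Q' w) -> ae Q'.
Proof. intros [N [a [b c]]] H. exists N; repeat split; auto. Qed.

Lemma ae_and (Q1 Q2 : Omega -> Prop) : ae Q1 -> ae Q2 -> ae (fun w => Q1 w /\ Q2 w).
Proof.
  intros H1 H2.
  apply ae_mono with (fun w => forall n:nat, match n with O => Q1 w | _ => Q2 w end).
  apply ae_all. intros [|n]; auto. intros w h; split; [apply (h O)|apply (h 1%nat)].
Qed.

Lemma ae_true (Q : Omega -> Prop) : (forall w, Q w) -> ae Q.
Proof. intros H. exists (fun _ => False). repeat split; auto using F_empty, P_empty. Qed.


Notation meas := (measurable Omega F).

Lemma meas_ext X Y : meas X -> (forall w, X w = Y w) -> meas Y.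
Proof. intros H E. replace Y with X; auto. apply functional_extensionality; auto. Qed.

Lemma meas_const c : meas (fun _ => c).
Proof.
  intro a. destruct (Rle_dec c a).
  - apply F_ext with (fun _ => True). apply F_True. intro; tauto.
  - apply F_ext with (fun _ => False). apply F_empty. intro; tauto.
Qed.

Lemma meas_lt X a : meas X -> F (fun w => X w < a).
Proof.
  intros H. apply F_ext with (fun w => exists n:nat, X w <= a - / INR (S n)).
  - apply F_cunion; intro; apply H.
  - intro w; split.
    + intros [n hn]. assert (0 < / INR (S n)) by (apply Rinv_0_lt_compat, lt_0_INR; lia). lra.
    + intro h. destruct (archimed (/ (a - X w))) as [h1 _].
      assert (0 < a - X w) by lra.
      assert (0 < / (a - X w)) by (apply Rinv_0_lt_compat; lra).
      exists (Z.to_nat (up (/ (a - X w)))).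
      rewrite S_INR, INR_IZR_INZ, Z2Nat.id.
      2: { apply le_IZR. lra. }
      set (u := IZR (up (/ (a - X w)))) in *.
      assert (/ (u + 1) < a - X w).
      { rewrite <- (Rinv_inv (a - X w)). apply Rinv_lt_contravar. nra. lra. }
      lra.
Qed.

Lemma meas_ge X a : meas X -> F (fun w => a <= X w).
Proof. intros H. apply F_ext with (fun w => ~ X w < a). apply F_compl, meas_lt, H. intro; lra. Qed.
Lemma meas_gt X a : meas X -> F (fun w => a < X w).
Proof. intros H. apply F_ext with (fun w => ~ X w <= a). apply F_compl, H. intro; lra. Qed.

Lemma meas_of_lt X : (forall a, F (fun w => X w < a)) -> meas X.
Proof.
  intros H a. apply F_ext with (fun w => forall n:nat, X w < a + / INR (S n)).
  - apply F_cinter; intro; apply H.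
  - intro w; split.
    + intro h. apply Rnot_lt_le. intro hl.
      destruct (archimed (/ (X w - a))) as [h1 _].
      assert (0 < / (X w - a)) by (apply Rinv_0_lt_compat; lra).
      specialize (h (Z.to_nat (up (/ (X w - a))))).
      rewrite S_INR, INR_IZR_INZ, Z2Nat.id in h.
      2: { apply le_IZR. lra. }
      set (u := IZR (up (/ (X w - a)))) in *.
      assert (/ (u + 1) < X w - a).
      { rewrite <- (Rinv_inv (X w - a)). apply Rinv_lt_contravar. nra. lra. }
      lra.
    + intros h n. assert (0 < / INR (S n)) by (apply Rinv_0_lt_compat, lt_0_INR; lia). lra.
Qed.

Lemma meas_opp X : meas X -> meas (fun w => - X w).
Proof. intros H a. apply F_ext with (fun w => - a <= X w). apply meas_ge, H. intro; lra. Qed.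

Lemma meas_scal c X : meas X -> meas (fun w => c * X w).
Proof.
  intros H. destruct (Rtotal_order c 0) as [l|[e|g]].
  - apply meas_ext with (fun w => - ((-c) * X w)). 2: intro; ring.
    apply meas_opp. intro a. apply F_ext with (fun w => X w <= a / (-c)). apply H.
    intro w. split; intro h.
    + apply Rmult_le_compat_l with (r := -c) in h; [|lra]. field_simplify in h; lra.
    + apply Rmult_le_reg_l with (-c). lra. field_simplify; lra.
  - subst. apply meas_ext with (fun _ => 0). apply meas_const. intro; ring.
  - intro a. apply F_ext with (fun w => X w <= a / c). apply H.
    intro w. split; intro h.
    + apply Rmult_le_compat_l with (r := c) in h; [|lra]. field_simplify in h; lra.
    + apply Rmult_le_reg_l with c. lra. field_simplify; lra.
Qed.

Lemma F_Zunion (A : Z -> Omega -> Prop) : (forall z, F (A z)) -> F (fun w => exists z, A z w).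
Proof.
  intros H. apply F_ext with (fun w => exists n:nat, A (Z.of_nat n) w \/ A (- Z.of_nat n)%Z w).
  - apply F_cunion; intro; apply F_union; auto.
  - intro w; split. intros [n [h|h]]; eauto.
    intros [z hz]. destruct (Z_le_gt_dec 0 z).
    + exists (Z.to_nat z). left. rewrite Z2Nat.id; auto.
    + exists (Z.to_nat (- z)). right. rewrite Z2Nat.id by lia. rewrite Z.opp_involutive; auto.
Qed.

Lemma meas_plus X Y : meas X -> meas Y -> meas (fun w => X w + Y w).
Proof.
  intros HX HY. apply meas_of_lt. intro b.
  apply F_ext with (fun w => exists j:nat, exists z:Z,
     X w < IZR z / INR (S j) /\ Y w < b - IZR z / INR (S j)).
  - apply F_cunion; intro j. apply F_Zunion; intro z. apply F_inter; [apply meas_lt|apply meas_lt]; auto.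
  - intro w; split.
    + intros [j [z [h1 h2]]]. lra.
    + intro h. set (g := b - X w - Y w).
      assert (0 < g) by (unfold g; lra).
      destruct (archimed (/ g)) as [h1 _].
      assert (0 < / g) by (apply Rinv_0_lt_compat; lra).
      exists (Z.to_nat (up (/ g))).
      rewrite S_INR, INR_IZR_INZ, Z2Nat.id.
      2: { apply le_IZR. lra. }
      set (u := IZR (up (/ g))) in *.
      assert (/ (u + 1) < g).
      { rewrite <- (Rinv_inv g). apply Rinv_lt_contravar. nra. lra. }
      exists (up (X w * (u + 1))).
      destruct (archimed (X w * (u + 1))) as [a1 a2].
      set (v := IZR (up (X w * (u + 1)))) in *.
      assert (Hu1 : 0 < u + 1) by lra.
      split.
      * apply Rmult_lt_reg_r with (u + 1); auto. field_simplify; lra.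
      * assert (v / (u + 1) <= X w + / (u + 1)).
        { apply Rmult_le_reg_r with (u + 1); auto. field_simplify; lra. }
        unfold g in *. lra.
Qed.

Lemma meas_sq X : meas X -> meas (fun w => X w * X w).
Proof.
  intros H a. destruct (Rlt_dec a 0).
  - apply F_ext with (fun _ => False). apply F_empty. intro w; split; [tauto| intro; nra].
  - apply F_ext with (fun w => X w <= sqrt a /\ - sqrt a <= X w).
    + apply F_inter; [apply H| apply meas_ge, H].
    + assert (hs := sqrt_sqrt a). assert (hp := sqrt_pos a).
      intro w; split; intro h; [nra|].
      destruct (Rle_dec (X w) (sqrt a)); destruct (Rle_dec (- sqrt a) (X w)); try (split; auto; fail); exfalso; nra.
Qed.

Lemma meas_mult X Y : meas X -> meas Y -> meas (fun w => X w * Y w).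
Proof.
  intros HX HY.
  apply meas_ext with (fun w => / 4 * ((X w + Y w) * (X w + Y w) + - ((X w + - Y w) * (X w + - Y w)))).
  - apply meas_scal, meas_plus; [apply meas_sq, meas_plus| apply meas_opp, meas_sq, meas_plus]; auto using meas_opp.
  - intro; field.
Qed.

Lemma meas_abs X : meas X -> meas (fun w => Rabs (X w)).
Proof.
  intros H a. apply F_ext with (fun w => X w <= a /\ - a <= X w).
  apply F_inter; [apply H|apply meas_ge, H].
  intro w; unfold Rabs; destruct Rcase_abs; lra.
Qed.

Lemma meas_inv X : meas X -> (forall w, 1 <= X w) -> meas (fun w => / X w).
Proof.
  intros H H1 a. destruct (Rle_dec a 0).
  - apply F_ext with (fun _ => False). apply F_empty. intro w; split; [tauto|].
    intro h. specialize (H1 w). assert (0 < / X w) by (apply Rinv_0_lt_compat; lra). lra.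
  - apply F_ext with (fun w => / a <= X w). apply meas_ge, H.
    intro w; specialize (H1 w); split; intro h.
    + rewrite <- (Rinv_inv a). apply Rinv_le_contravar; auto. apply Rinv_0_lt_compat; lra.
    + rewrite <- (Rinv_inv (X w)). apply Rinv_le_contravar; auto. apply Rinv_0_lt_compat; lra.
Qed.

Lemma meas_fsum m (g : nat -> Omega -> R) : (forall n, (n < m)%nat -> meas (g n)) ->
  meas (fun w => fsum m (fun n => g n w)).
Proof.
  induction m; intro H; simpl.
  - apply meas_const.
  - apply meas_plus. apply IHm; intros; apply H; lia. apply H; lia.
Qed.


Lemma fsum_ext m g h : (forall n, (n < m)%nat -> g n = h n) -> fsum m g = fsum m h.
Proof. induction m; intro H; simpl; auto. rewrite IHm, H; auto; intros; apply H; lia. Qed.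
Lemma fsum_scal m c g : fsum m (fun n => c * g n) = c * fsum m g.
Proof. induction m; simpl; [ring| rewrite IHm; ring]. Qed.
Lemma fsum_plus m g h : fsum m (fun n => g n + h n) = fsum m g + fsum m h.
Proof. induction m; simpl; [ring| rewrite IHm; ring]. Qed.
Lemma fsum_nonneg m g : (forall n, 0 <= g n) -> 0 <= fsum m g.
Proof. induction m; simpl; intros; [lra| specialize (IHm H); specialize (H m); lra]. Qed.
Lemma fsum_bound m a b c M : (forall n, (n < m)%nat -> Rabs (b n - c n) <= M) ->
  Rabs (fsum m (fun n => a n * b n) - fsum m (fun n => a n * c n)) <= fsum m (fun n => Rabs (a n)) * M.
Proof.
  induction m; intro H; simpl.
  - rewrite Rminus_diag, Rabs_R0. lra.
  - assert (IH := IHm (fun n h => H n ltac:(lia))).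
    assert (Hm := H m ltac:(lia)).
    replace (fsum m (fun n => a n * b n) + a m * b m - (fsum m (fun n => a n * c n) + a m * c m))
      with ((fsum m (fun n => a n * b n) - fsum m (fun n => a n * c n)) + a m * (b m - c m)) by ring.
    eapply Rle_trans. apply Rabs_triang. rewrite Rabs_mult.
    assert (Rabs (a m) * Rabs (b m - c m) <= Rabs (a m) * M) by (apply Rmult_le_compat_l; auto using Rabs_pos).
    lra.
Qed.

Lemma supP_ge (N : list nat) (z : nat -> Omega -> R) (w : Omega) (k : nat) : In k N -> pk Omega k z w <= supP Omega N z w.
Proof.
  unfold supP. induction N as [|a N IH]; simpl; [tauto|].
  intros [e|h]. subst. apply Rmax_l. eapply Rle_trans; [apply IH; auto| apply Rmax_r].
Qed.

Lemma backward (f : (nat -> Omega -> R) -> Omega -> R) (Hf : is_map_E_L0 Omega F P f)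
  m xs (Hxs : forall n, (n < m)%nat -> meas (xs n))
  (Hrep : forall y, in_E Omega F y -> ae_eq Omega F P (f y) (fun w => fsum m (fun n => xs n w * y n w))) :
  in_Estar0 Omega F P f.
Proof.
  split; [split|].
  - intros r x Hr Hx.
    assert (Hrx : in_E Omega F (fun n w => r w * x n w)) by (intro n; apply meas_mult; auto).
    eapply ae_mono; [exact ((ae_and _ _ (Hrep _ Hrx) (Hrep _ Hx)))|]. intros w [h1 h2].
    rewrite h1, h2, <- fsum_scal. apply fsum_ext. intros; ring.
  - intros x y Hx Hy.
    assert (Hxy : in_E Omega F (fun n w => x n w + y n w)) by (intro n; apply meas_plus; auto).
    eapply ae_mono; [exact ((ae_and _ _ (Hrep _ Hxy) (ae_and _ _ (Hrep _ Hx) (Hrep _ Hy))))|].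
    intros w [h1 [h2 h3]]. rewrite h1, h2, h3, <- fsum_plus. apply fsum_ext. intros; ring.
  - intros V HV y Hy Vy.
    destruct (HV (f y) (proj1 Hf y Hy) Vy) as [t [r0 [Ht [[Hr0 Hr0p] [Hball Hsub]]]]].
    set (S := fun w => fsum m (fun n => Rabs (xs n w))).
    assert (HS : forall w, 0 <= S w) by (intro; apply fsum_nonneg; intro; apply Rabs_pos).
    set (r := fun w => (r0 w + - Rabs (f y w + - t w)) * / (1 + S w)).
    assert (Hrpos : ae (fun w => 0 < r w)).
    { eapply ae_mono; [exact (Hball)|]. intros w h. unfold r.
      apply Rmult_lt_0_compat. unfold Rminus in h; lra. apply Rinv_0_lt_compat. specialize (HS w); lra. }
    exists y, (seq 0 m), r. split; auto. split; [split|split].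
    + apply meas_mult. apply meas_plus; auto. apply meas_opp, meas_abs, meas_plus. apply (proj1 Hf y Hy). apply meas_opp; auto.
      apply meas_inv. apply meas_plus. apply meas_const. apply meas_fsum. intros; apply meas_abs; auto.
      intro w; specialize (HS w); lra.
    + exact Hrpos.
    + eapply ae_mono; [exact (Hrpos)|]. intros w h. unfold supP, seq_sub.
      replace (map _ _) with (map (fun _ : nat => 0) (seq 0 m)).
      2: { apply map_ext. intro; unfold pk. rewrite Rminus_diag, Rabs_R0; auto. }
      clear -h. induction (seq 0 m); simpl; auto. apply Rmax_lub_lt; auto.
    + intros z Hz Hb. apply Hsub. apply (proj1 Hf z Hz).
      eapply ae_mono; [exact (ae_and _ _ Hb (ae_and _ _ Hball (ae_and _ _ (Hrep _ Hy) (Hrep _ Hz))))|]. intros w [h1 [h2 [h3 h4]]].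
      assert (Hm : forall n, (n < m)%nat -> Rabs (y n w - z n w) <= r w).
      { intros n hn. apply Rlt_le. eapply Rle_lt_trans; [|apply h1].
        apply (supP_ge (seq 0 m) (seq_sub Omega y z) w n). apply in_seq. lia. }
      assert (B := fsum_bound m (fun n => xs n w) (fun n => y n w) (fun n => z n w) (r w) Hm).
      fold (S w) in B. cbv beta in B. rewrite <- h3, <- h4 in B.
      assert (Hsr : S w * r w < r0 w - Rabs (f y w - t w)).
      { unfold r. assert (hS := HS w). unfold Rminus in h2.
        set (G := r0 w + - Rabs (f y w + - t w)) in *.
        assert (0 < G) by (unfold G; lra).
        replace (S w * (G * / (1 + S w))) with (G * (S w / (1 + S w))) by (field; lra).
        assert (S w / (1 + S w) < 1).
        { apply Rmult_lt_reg_r with (1 + S w). lra. field_simplify; lra. }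
        unfold Rminus. fold G. nra. }
      replace (f z w - t w) with ((f z w - f y w) + (f y w - t w)) by ring.
      eapply Rle_lt_trans. apply Rabs_triang.
      rewrite <- Rabs_Ropp, Ropp_minus_distr in B. fold (S w) in B. lra.
Qed.

Definition ek (k : nat) : nat -> Omega -> R := fun n _ => if Nat.eq_dec n k then 1 else 0.
Definition trunc (y : nat -> Omega -> R) (j : nat) : nat -> Omega -> R :=
  fun n w => if Compare_dec.lt_dec n j then y n w else 0.
Definition tail (y : nat -> Omega -> R) (j : nat) : nat -> Omega -> R :=
  fun n w => if Compare_dec.lt_dec n j then 0 else y n w.

Lemma in_N_lt (N : list nat) k : In k N -> (k < S (fold_right max 0 N))%nat.
Proof. induction N; simpl; [tauto|]. intros [e|h]; [subst; lia| specialize (IHN h); lia]. Qed.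

Lemma forward (f : (nat -> Omega -> R) -> Omega -> R) (Hf : is_map_E_L0 Omega F P f) :
  in_Estar0 Omega F P f ->
  exists (m : nat) (xs : nat -> Omega -> R),
    (forall n, (n < m)%nat -> meas (xs n)) /\
    (forall y, in_E Omega F y ->
       ae_eq Omega F P (f y) (fun w => fsum m (fun n => xs n w * y n w))).
Proof.
  intros [[Hlin1 Hlin2] HC].
  set (zero := fun (n : nat) (w : Omega) => 0).
  assert (Hzero : in_E Omega F zero) by (intro; apply meas_const).
  assert (Hf0 : ae (fun w => f zero w = 0)).
  { assert (H := Hlin1 (fun _ => 0) zero (meas_const 0) Hzero). cbv beta in H.
    replace (fun (n : nat) (w : Omega) => 0 * zero n w) with zero in H.
    2: { apply functional_extensionality; intro; apply functional_extensionality; intro; unfold zero; ring. }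
    eapply ae_mono; [exact H|]. intros w h; rewrite h; ring. }
  set (V := fun u : Omega -> R => ae (fun w => Rabs (u w - 0) < 1)).
  assert (HV : openL Omega F P V).
  { intros s Hs Vs. exists (fun _ => 0), (fun _ => 1). split; [apply meas_const|].
    split; [split; [apply meas_const| apply ae_true; intro; lra]|]. split; auto. }
  assert (Vz : V (f zero)).
  { eapply ae_mono; [exact Hf0|]. intros w h; rewrite h, Rminus_diag, Rabs_R0; lra. }
  destruct (HC V HV zero Hzero Vz) as [x [N [r [Hx [Hr [Hb0 Hsub]]]]]].
  set (m := S (fold_right max 0%nat N)).
  assert (Hvan : forall z, in_E Omega F z -> (forall n w, (n < m)%nat -> z n w = 0) ->
                 ae (fun w => f z w = 0)).
  { intros z Hz Hz0.
    assert (Hj : forall j : nat, ae (fun w => Rabs (INR (S j) * f z w) < 1)).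
    { intro j. set (c := INR (S j)).
      assert (Hcz : in_E Omega F (fun n w => (fun _ => c) w * z n w)) by (intro; apply meas_scal; auto).
      assert (Hb : ballE Omega F P x N r (fun n w => (fun _ => c) w * z n w)).
      { eapply ae_mono; [exact Hb0|]. intros w h. unfold supP in *.
        replace (map _ N) with (map (fun k => pk Omega k (seq_sub Omega x zero) w) N); auto.
        apply map_ext_in. intros k hk. unfold pk, seq_sub, zero.
        rewrite (Hz0 k w (in_N_lt N k hk)). f_equal. ring. }
      assert (H1 := Hsub _ Hcz Hb).
      eapply ae_mono; [exact (ae_and _ _ H1 (Hlin1 (fun _ => c) z (meas_const c) Hz))|].
      intros w [h1 h2]. cbv beta in h2. rewrite <- h2. rewrite Rminus_0_r in h1. exact h1. }
    eapply ae_mono; [exact (ae_all _ Hj)|]. intros w h.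
    destruct (Req_dec (f z w) 0) as [e|ne]; auto. exfalso.
    apply Rabs_pos_lt in ne.
    destruct (archimed (/ Rabs (f z w))) as [h1 _].
    assert (0 < / Rabs (f z w)) by (apply Rinv_0_lt_compat; lra).
    specialize (h (Z.to_nat (up (/ Rabs (f z w))))). cbv beta in h.
    rewrite S_INR, INR_IZR_INZ, Z2Nat.id, Rabs_mult in h.
    2: { apply le_IZR. lra. }
    set (u := IZR (up (/ Rabs (f z w)))) in *.
    rewrite Rabs_right in h by lra.
    assert (1 <= u * Rabs (f z w)).
    { apply Rmult_le_reg_r with (/ Rabs (f z w)). auto.
      rewrite Rmult_assoc, Rinv_r by lra. lra. }
    nra. }
  exists m, (fun k => f (ek k)). split.
  { intros n _. apply (proj1 Hf). intro k. apply meas_const. }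
  intros y Hy.
  assert (Htr : forall j, in_E Omega F (trunc y j)).
  { intros j n. unfold trunc. destruct Compare_dec.lt_dec. apply Hy. apply meas_const. }
  assert (Htl : forall j, in_E Omega F (tail y j)).
  { intros j n. unfold tail. destruct Compare_dec.lt_dec. apply meas_const. apply Hy. }
  assert (Hek : forall k, in_E Omega F (ek k)) by (intros k n; apply meas_const).
  assert (HA : forall j, ae (fun w => f (trunc y j) w = fsum j (fun n => f (ek n) w * y n w))).
  { induction j.
    - simpl. apply Hvan. apply Htr. intros n w _. unfold trunc. destruct Compare_dec.lt_dec; auto; lia.
    - assert (E : trunc y (S j) = fun n w => trunc y j n w + y j w * ek j n w).
      { apply functional_extensionality; intro n; apply functional_extensionality; intro w.
        unfold trunc, ek. destruct (Nat.eq_dec n j); destruct Compare_dec.lt_dec; destruct Compare_dec.lt_dec;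
          try lia; subst; try ring. }
      assert (Hyek : in_E Omega F (fun n w => y j w * ek j n w)) by (intro n; apply meas_mult; [apply Hy| apply Hek]).
      assert (H2 := Hlin2 _ _ (Htr j) Hyek). cbv beta in H2. rewrite <- E in H2.
      assert (H1 := Hlin1 (y j) (ek j) (Hy j) (Hek j)).
      eapply ae_mono; [exact (ae_and _ _ IHj (ae_and _ _ H1 H2))|].
      intros w [h1 [h2 h3]]. simpl. rewrite h3, h1, h2. ring. }
  assert (E : (fun n w => trunc y m n w + tail y m n w) = y).
  { apply functional_extensionality; intro n; apply functional_extensionality; intro w.
    unfold trunc, tail. destruct Compare_dec.lt_dec; ring. }
  assert (H2 := Hlin2 _ _ (Htr m) (Htl m)). rewrite E in H2.
  assert (Ht0 : ae (fun w => f (tail y m) w = 0)).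
  { apply Hvan. apply Htl. intros n w hn. unfold tail. destruct Compare_dec.lt_dec; auto; lia. }
  eapply ae_mono; [exact (ae_and _ _ H2 (ae_and _ _ Ht0 (HA m)))|].
  intros w [h1 [h2 h3]]. rewrite h1, h2, h3. ring.
Qed.

End S.

Theorem mainTheorem5 (Omega : Type) (F : (Omega -> Prop) -> Prop)
  (P : (Omega -> Prop) -> R) (HP : is_prob_space Omega F P)
  (f : (nat -> Omega -> R) -> Omega -> R) (Hf : is_map_E_L0 Omega F P f) :
  in_Estar0 Omega F P f <->
  exists (m : nat) (xs : nat -> Omega -> R),
    (forall n, (n < m)%nat -> measurable Omega F (xs n)) /\
    (forall y, in_E Omega F y ->
       ae_eq Omega F P (f y) (fun w => fsum m (fun n => xs n w * y n w))).
Proof.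
  split.
  - apply forward; auto.
  - intros [m [xs [H1 H2]]]. eapply backward; eauto.
Qed.
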